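(* Let $D_5$ be the undirected tree with vertices $v,a,b,c,d$ and edges $va, vb, vc, cd$. Let $\Gamma$ be a vertex-transitive connected undirected graph with more than five vertices that contains a subgraph isomorphic to $D_5$, and suppose $\Upsilon_v(D_5,\Gamma)$ is finite. Then $\Upsilon_v^{\mathrm{sym}}(D_5,\Gamma)<5\,\Upsilon_v(D_5,\Gamma)$. In particular, $D_5$ is not vertex-costly in the class of vertex-transitive connected graphs.
   Context: Undirected graphs (loops and multiple edges may be present in $\Gamma$). ''Subgraph'' means an arbitrary (not necessarily induced) subgraph. A graph is vertex-transitive if its automorphism group acts transitively on its vertices. $\Upsilon_v(K,\Gamma)$ is the minimal integer $n$ such that $\Gamma$ has a set $X$ of $n$ vertices with every subgraph of $\Gamma$ isomorphic to $K$ containing a vertex of $X$; $\Upsilon_v^{\mathrm{sym}}(K,\Gamma)$ is the minimal such $n$ when $X$ is additionally required to be $\mathrm{Aut}\,\Gamma$-invariant. A finite graph $K$ with $k$ vertices is vertex-costly in a class $\mathcal{K}$ if for every integer $m$ there exists $\Gamma_m\in\mathcal{K}$ with $\Upsilon_v^{\mathrm{sym}}(K,\Gamma_m)=k\cdot\Upsilon_v(K,\Gamma_m)\ge m$. *)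

(* Defs.v *)
(* Graphs may be infinite and may have loops and multiple edges. *)
From Stdlib Require Import List Arith Relations.
Import ListNotations.

(* An undirected multigraph: a vertex type, an edge type, and for each edge
   its (unordered) pair of endpoints, represented by an ordered pair read up
   to swapping. *)
Record graph := Graph { V : Type; E : Type; ends : E -> V * V }.

Definition joins (G : graph) (e : E G) (x y : V G) : Prop :=
  ends G e = (x, y) \/ ends G e = (y, x).

Definition adj (G : graph) (x y : V G) : Prop := exists e : E G, joins G e x y.

Definition bijective {A B : Type} (f : A -> B) : Prop :=
  exists g : B -> A, (forall a, g (f a) = a) /\ (forall b, f (g b) = b).

(* Vertex part of an automorphism of the multigraph: a bijection on vertices
   together with a bijection on edges preserving incidence. *)
Definition is_aut (G : graph) (f : V G -> V G) : Prop :=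
  bijective f /\
  exists g : E G -> E G, bijective g /\
    forall e x y, joins G e x y -> joins G (g e) (f x) (f y).

Definition vertex_transitive (G : graph) : Prop :=
  forall x y : V G, exists f, is_aut G f /\ f x = y.

Definition connected (G : graph) : Prop :=
  forall x y : V G, clos_refl_trans (V G) (adj G) x y.

Definition more_than_five_vertices (G : graph) : Prop :=
  exists l : list (V G), NoDup l /\ length l = 6.

(* A subgraph of G isomorphic
   to D_5 is given (as far as its vertex set is concerned) by five pairwise
   distinct vertices with the four required adjacencies. *)
Definition D5_copy (G : graph) (v a b c d : V G) : Prop :=
  NoDup [v; a; b; c; d] /\ adj G v a /\ adj G v b /\ adj G v c /\ adj G c d.

Definition contains_D5 (G : graph) : Prop :=
  exists v a b c d, D5_copy G v a b c d.

Definition hits_D5 (G : graph) (X : list (V G)) : Prop :=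
  forall v a b c d, D5_copy G v a b c d ->
    exists w, In w [v; a; b; c; d] /\ In w X.

Definition aut_invariant (G : graph) (X : list (V G)) : Prop :=
  forall f, is_aut G f -> forall x, In x X -> In (f x) X.

Definition D5_transversal (G : graph) (n : nat) : Prop :=
  exists X : list (V G), NoDup X /\ length X = n /\ hits_D5 G X.

Definition D5_sym_transversal (G : graph) (n : nat) : Prop :=
  exists X : list (V G), NoDup X /\ length X = n /\ hits_D5 G X
    /\ aut_invariant G X.

(* Upsilon_v(D5, G) = n  (in particular it is finite) *)
Definition Upsilon_v_D5 (G : graph) (n : nat) : Prop :=
  D5_transversal G n /\ forall m, D5_transversal G m -> n <= m.

(* Upsilon_v^sym(D5, G) = n  (in particular it is finite) *)
Definition Upsilon_v_sym_D5 (G : graph) (n : nat) : Prop :=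
  D5_sym_transversal G n /\ forall m, D5_sym_transversal G m -> n <= m.

Definition vt_connected (G : graph) : Prop :=
  vertex_transitive G /\ connected G.

Definition D5_vertex_costly (K : graph -> Prop) : Prop :=
  forall m : nat, exists G : graph, K G /\
    exists n s, Upsilon_v_D5 G n /\ Upsilon_v_sym_D5 G s /\ s = 5 * n /\ m <= s.

(* Main.v *)
Require Import Defs.
From Stdlib Require Import List Arith Relations Lia Classical ClassicalEpsilon.
Import ListNotations.

Lemma adj_sym G x y : adj G x y -> adj G y x.
Proof. intros [e H]. exists e. unfold joins in *. tauto. Qed.

Lemma aut_adj G f x y : is_aut G f -> adj G x y -> adj G (f x) (f y).
Proof. intros [_ [g [_ Hg]]] [e He]. exists (g e). apply Hg; auto. Qed.

Lemma aut_inj G f x y : is_aut G f -> f x = f y -> x = y.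
Proof. intros [[h [H1 _]] _] E. rewrite <- (H1 x), <- (H1 y), E; reflexivity. Qed.

Lemma nodup5 {A} (a b c d e : A) : NoDup [a;b;c;d;e] <->
  (a<>b/\a<>c/\a<>d/\a<>e/\b<>c/\b<>d/\b<>e/\c<>d/\c<>e/\d<>e).
Proof.
  split.
  - intro H. repeat rewrite NoDup_cons_iff in H. simpl in H.
    repeat split; intro; subst; tauto.
  - intros. repeat constructor; simpl; intuition congruence.
Qed.

Lemma aut_copy G f v a b c d : is_aut G f -> D5_copy G v a b c d ->
  D5_copy G (f v) (f a) (f b) (f c) (f d).
Proof.
  unfold D5_copy. rewrite !nodup5. intros Hf [N [H1 [H2 [H3 H4]]]].
  split.
  - repeat split; intro E; apply (aut_inj G f) in E; auto; tauto.
  - repeat split; apply aut_adj; auto.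
Qed.

Lemma pick {A} (l e : list A) k : NoDup l -> length e + k <= length l ->
  exists l', NoDup l' /\ length l' = k /\ incl l' l /\ (forall x, In x l' -> ~ In x e).
Proof.
  assert (dec : forall x y : A, {x = y} + {x <> y}) by (intros; apply excluded_middle_informative).
  revert e k. induction l as [|a l IH]; intros e k nd Hl.
  - exists []. simpl in Hl. split; [constructor|]. split; [simpl; lia|]. split; intros x [].
  - apply NoDup_cons_iff in nd as [na nd]. simpl in Hl.
    destruct (classic (In a e)) as [Ha|Ha].
    + pose proof (remove_length_lt dec e a Ha).
      destruct (IH (remove dec a e) k nd ltac:(lia)) as [l' [n1 [n2 [n3 n4]]]].
      exists l'. repeat split; auto.
      * intros x Hx. right. auto.
      * intros x Hx Hxe. apply (n4 x Hx). apply in_in_remove; auto.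
        intro; subst. apply na. auto.
    + destruct k as [|k].
      * exists []. split; [constructor|]. split; [reflexivity|]. split; intros x [].
      * destruct (IH e k nd ltac:(lia)) as [l' [n1 [n2 [n3 n4]]]].
        exists (a :: l'). repeat split; simpl; auto.
        -- constructor; auto.
        -- intros x [<-|Hx]; [left; auto | right; auto].
        -- intros x [<-|Hx]; auto.
Qed.

Lemma nodup_exists {A} (l : list A) : exists l', NoDup l' /\ forall x, In x l -> In x l'.
Proof.
  induction l as [|a l [l' [H1 H2]]].
  - exists []. split; [constructor| intros x []].
  - destruct (classic (In a l')).
    + exists l'. split; auto. intros x [<-|Hx]; auto.
    + exists (a :: l'). split; [constructor; auto|]. intros x [<-|Hx]; simpl; auto.
Qed.

Definition deg3 (G : graph) := forall w : V G, exists p q r, p<>q /\ p<>r /\ q<>r /\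
  p<>w /\ q<>w /\ r<>w /\ adj G w p /\ adj G w q /\ adj G w r.

Lemma deg3_of G : vertex_transitive G -> contains_D5 G -> deg3 G.
Proof.
  intros vt [v [a [b [c [d [N [H1 [H2 [H3 H4]]]]]]]]] w.
  rewrite nodup5 in N. destruct (vt v w) as [f [Hf <-]].
  exists (f a), (f b), (f c).
  repeat split; try (intro E; apply (aut_inj G f) in E; subst; tauto); apply aut_adj; auto.
Qed.

Lemma three_hit {A} (P : A -> Prop) (o x y z : A) :
  (exists p q r, p<>q/\p<>r/\q<>r/\p<>o/\q<>o/\r<>o/\P p/\P q/\P r) ->
  (forall w, P w -> w <> o -> w = x \/ w = y \/ w = z) -> P x /\ P y /\ P z.
Proof.
  intros [p [q [r [n1 [n2 [n3 [n4 [n5 [n6 [Pp [Pq Pr]]]]]]]]]]] H.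
  destruct (H p Pp n4) as [ -> | [ -> | -> ]]; destruct (H q Pq n5) as [ -> | [ -> | -> ]];
  destruct (H r Pr n6) as [ -> | [ -> | -> ]]; try congruence; tauto.
Qed.

Lemma pick1 {A} (P : A -> Prop) (o x y : A) :
  (exists p q r, p<>q/\p<>r/\q<>r/\p<>o/\q<>o/\r<>o/\P p/\P q/\P r) ->
  exists z, P z /\ z <> o /\ z <> x /\ z <> y.
Proof.
  intros [p [q [r [n1 [n2 [n3 [n4 [n5 [n6 [Pp [Pq Pr]]]]]]]]]]].
  destruct (classic (p = x \/ p = y)); [|exists p; tauto].
  destruct (classic (q = x \/ q = y)); [|exists q; tauto].
  exists r. repeat split; auto; intro; subst; intuition congruence.
Qed.

Lemma pick2 {A} (P : A -> Prop) (o x : A) :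
  (exists p q r, p<>q/\p<>r/\q<>r/\p<>o/\q<>o/\r<>o/\P p/\P q/\P r) ->
  exists z1 z2, z1 <> z2 /\ P z1 /\ P z2 /\ z1 <> o /\ z2 <> o /\ z1 <> x /\ z2 <> x.
Proof.
  intros [p [q [r [n1 [n2 [n3 [n4 [n5 [n6 [Pp [Pq Pr]]]]]]]]]]].
  destruct (classic (p = x)); [subst; exists q, r; repeat split; auto|].
  destruct (classic (q = x)); [subst; exists p, r; repeat split; auto|].
  exists p, q; repeat split; auto.
Qed.

Lemma closure G (S : list (V G)) : connected G -> more_than_five_vertices G ->
  (exists s, In s S) -> (forall s z, In s S -> adj G s z -> In z S) -> length S < 6 -> False.
Proof.
  intros conn [l6 [nd len]] [s0 Hs0] Hcl Hlen.
  assert (R : forall x y, clos_refl_trans_1n _ (adj G) x y -> In x S -> In y S)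
    by (induction 1; eauto).
  assert (incl l6 S). { intros y _. apply (R s0); auto. apply clos_rt_rt1n. apply conn. }
  pose proof (NoDup_incl_length nd H). lia.
Qed.

Lemma reach G (v : V G) : connected G ->
  (forall y z, (y = v \/ adj G v y) -> adj G y z -> z = v \/ adj G v z) ->
  forall z, z = v \/ adj G v z.
Proof.
  intros conn H z.
  assert (R : forall x y, clos_refl_trans_1n _ (adj G) x y -> (x = v \/ adj G v x) -> (y = v \/ adj G v y))
    by (induction 1; eauto).
  apply (R v); auto. apply clos_rt_rt1n, conn.
Qed.

Definition good (G : graph) := exists v a b c d z, D5_copy G v a b c d /\
  ~ In z [v;a;b;c;d] /\ (adj G v z \/ adj G c z).

Ltac fin := solve [ congruence | contradiction
  | match goal with H : ~ adj _ ?x ?y , H2 : adj _ ?y ?x |- _ => exact (H (adj_sym _ _ _ H2)) end ].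
Ltac neq := let E := fresh in intro E; subst; fin.
Ltac notin := simpl; let H := fresh in intro H;
  repeat (destruct H as [H|H]; [subst; fin|]); exact H.
Ltac mkcopy := unfold D5_copy; rewrite nodup5;
  repeat split; try neq; try assumption; try (apply adj_sym; assumption).

Section K.
Variable G : graph.
Hypothesis D3 : deg3 G.
Hypothesis conn : connected G.
Hypothesis six : more_than_five_vertices G.
Hypothesis NG : ~ good G.

Lemma NGv v a b c d z : D5_copy G v a b c d -> ~ In z [v;a;b;c;d] -> adj G v z -> False.
Proof. intros. apply NG. exists v, a, b, c, d, z. auto. Qed.
Lemma NGc v a b c d z : D5_copy G v a b c d -> ~ In z [v;a;b;c;d] -> adj G c z -> False.
Proof. intros. apply NG. exists v, a, b, c, d, z. auto. Qed.

Lemma cl5 (v a b c d : V G) :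
  (forall s z, In s [v;a;b;c;d] -> adj G s z -> z <> s -> In z [v;a;b;c;d]) -> False.
Proof.
  intros H. apply (closure G [v;a;b;c;d] conn six).
  - exists v; simpl; auto.
  - intros s z Hs Hsz. destruct (classic (z = s)) as [ ->|]; [exact Hs| exact (H s z Hs Hsz H0)].
  - simpl; lia.
Qed.

Lemma keyK v a b c d :
  adj G v a -> adj G v b -> adj G v c -> adj G c d -> adj G c a ->
  v<>a -> v<>b -> v<>c -> v<>d -> a<>b -> a<>c -> a<>d -> b<>c -> b<>d -> c<>d ->
  ~ adj G v d ->
  (forall z, adj G v z -> z <> v -> z = a \/ z = b \/ z = c) ->
  (forall z, adj G c z -> z <> c -> z = v \/ z = a \/ z = b \/ z = d) -> False.
Proof.
  intros Hva Hvb Hvc Hcd Hca n1 n2 n3 n4 n5 n6 n7 n8 n9 n10 nvd Hv Hc.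
  destruct (classic (adj G c b)) as [Hcb|Hncb].
  - assert (Hd : forall z, adj G d z -> z <> d -> z = c \/ z = a \/ z = b).
    { intros z Hdz nzd. destruct (classic (z = c \/ z = a \/ z = b)) as [?|Hn]; [assumption|exfalso].
      assert (z <> c) by tauto. assert (z <> a) by tauto. assert (z <> b) by tauto.
      assert (z <> v) by neq.
      apply (NGv c v a d z b); [mkcopy | notin | assumption]. }
    destruct (three_hit (adj G d) d c a b (D3 d) Hd) as [_ [Hda Hdb]].
    assert (Ha : forall z, adj G a z -> z <> a -> z = v \/ z = b \/ z = c \/ z = d).
    { intros z Haz nza. destruct (classic (z = v \/ z = b \/ z = c \/ z = d)) as [?|Hn]; [assumption|exfalso].
      assert (z <> v) by tauto. assert (z <> b) by tauto. assert (z <> c) by tauto. assert (z <> d) by tauto.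
      apply (NGv c v b a z d); [mkcopy | notin | assumption]. }
    assert (Hb : forall z, adj G b z -> z <> b -> z = v \/ z = a \/ z = c \/ z = d).
    { intros z Hbz nzb. destruct (classic (z = v \/ z = a \/ z = c \/ z = d)) as [?|Hn]; [assumption|exfalso].
      assert (z <> v) by tauto. assert (z <> a) by tauto. assert (z <> c) by tauto. assert (z <> d) by tauto.
      apply (NGv c v a b z d); [mkcopy | notin | assumption]. }
    apply (cl5 v a b c d). intros s z Hs Hsz nzs. simpl in Hs |- *.
    destruct Hs as [<-|[<-|[<-|[<-|[<-|[]]]]]].
    + destruct (Hv z Hsz nzs) as [ ->|[ ->| ->]]; tauto.
    + destruct (Ha z Hsz nzs) as [ ->|[ ->|[ ->| ->]]]; tauto.
    + destruct (Hb z Hsz nzs) as [ ->|[ ->|[ ->| ->]]]; tauto.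
    + destruct (Hc z Hsz nzs) as [ ->|[ ->|[ ->| ->]]]; tauto.
    + destruct (Hd z Hsz nzs) as [ ->|[ ->| ->]]; tauto.
  - destruct (pick1 (adj G b) b v a (D3 b)) as [z [Hbz [nzb [nzv nza]]]].
    assert (nzc : z <> c) by (intro; subst; apply Hncb; apply adj_sym; auto).
    assert (Hbu : forall z', adj G b z' -> z' <> b -> z' = v \/ z' = a \/ z' = z).
    { intros z' Hbz' nzb'. destruct (classic (z' = v \/ z' = a \/ z' = z)) as [?|Hn]; [assumption|exfalso].
      assert (z' <> v) by tauto. assert (z' <> a) by tauto. assert (z' <> z) by tauto.
      assert (z' <> c) by (intro; subst; apply Hncb; apply adj_sym; auto).
      apply (NGc v a c b z z'); [mkcopy | notin | assumption]. }
    destruct (three_hit (adj G b) b v a z (D3 b) Hbu) as [_ [Hba _]].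
    destruct (pick1 (adj G d) d c a (D3 d)) as [y [Hdy [nyd [nyc nya]]]].
    assert (nyv : y <> v) by neq.
    assert (Hdu : forall y', adj G d y' -> y' <> d -> y' = c \/ y' = a \/ y' = y).
    { intros y' Hdy' nyd'. destruct (classic (y' = c \/ y' = a \/ y' = y)) as [?|Hn]; [assumption|exfalso].
      assert (y' <> c) by tauto. assert (y' <> a) by tauto. assert (y' <> y) by tauto.
      assert (y' <> v) by neq.
      apply (NGc c v a d y y'); [mkcopy | notin | assumption]. }
    destruct (three_hit (adj G d) d c a y (D3 d) Hdu) as [_ [Hda _]].
    destruct (classic (z = d)) as [Ezd|nzd].
    2:{ apply (NGv a v c b z d); [mkcopy | notin | apply adj_sym; assumption]. }
    subst z.
    destruct (classic (y = b)) as [Eyb|nyb].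
    2:{ apply (NGv a v c d y b); [mkcopy | notin | apply adj_sym; assumption]. }
    subst y.
    assert (Ha : forall w, adj G a w -> w <> a -> w = v \/ w = b \/ w = c \/ w = d).
    { intros w Haw nwa. destruct (classic (w = v \/ w = b \/ w = c \/ w = d)) as [?|Hn]; [assumption|exfalso].
      assert (w <> v) by tauto. assert (w <> b) by tauto. assert (w <> c) by tauto. assert (w <> d) by tauto.
      apply (NGv a v b c d w); [mkcopy | notin | assumption]. }
    apply (cl5 v a b c d). intros s w Hs Hsw nws. simpl in Hs |- *.
    destruct Hs as [<-|[<-|[<-|[<-|[<-|[]]]]]].
    + destruct (Hv w Hsw nws) as [ ->|[ ->| ->]]; tauto.
    + destruct (Ha w Hsw nws) as [ ->|[ ->|[ ->| ->]]]; tauto.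
    + destruct (Hbu w Hsw nws) as [ ->|[ ->| ->]]; tauto.
    + destruct (Hc w Hsw nws) as [ ->|[ ->|[ ->| ->]]]; tauto.
    + destruct (Hdu w Hsw nws) as [ ->|[ ->| ->]]; tauto.
Qed.

End K.

Lemma good_exists G : deg3 G -> connected G -> more_than_five_vertices G -> good G.
Proof.
  intros D3 conn six. destruct (classic (good G)) as [H|NG]; [exact H|exfalso].
  pose proof six as [l6 [nd6 len6]].
  destruct l6 as [|v l6']; [simpl in len6; discriminate|].
  destruct (classic (exists c d, adj G v c /\ c <> v /\ adj G c d /\ d <> c /\ d <> v /\ ~ adj G v d))
    as [[c [d [Hvc [ncv [Hcd [ndc [ndv nvd]]]]]]] | Hno].
  - destruct (pick2 (adj G v) v c (D3 v)) as [a [b [nab [Hva [Hvb [nav [nbv [nac nbc]]]]]]]].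
    assert (nad : a <> d) by neq. assert (nbd : b <> d) by neq.
    assert (Hv : forall z, adj G v z -> z <> v -> z = a \/ z = b \/ z = c).
    { intros z Hvz nzv. destruct (classic (z = a \/ z = b \/ z = c)) as [?|Hn]; [assumption|exfalso].
      assert (z <> a) by tauto. assert (z <> b) by tauto. assert (z <> c) by tauto.
      assert (z <> d) by neq.
      apply (NGv G NG v a b c d z); [mkcopy | notin | assumption]. }
    assert (Hc : forall z, adj G c z -> z <> c -> z = v \/ z = a \/ z = b \/ z = d).
    { intros z Hcz nzc. destruct (classic (z = v \/ z = a \/ z = b \/ z = d)) as [?|Hn]; [assumption|exfalso].
      assert (z <> a) by tauto. assert (z <> b) by tauto. assert (z <> v) by tauto.
      assert (z <> d) by tauto.
      apply (NGc G NG v a b c d z); [mkcopy | notin | assumption]. }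
    destruct (pick1 (adj G c) c v d (D3 c)) as [e [Hce [nec [nev ned]]]].
    destruct (Hc e Hce nec) as [E|[E|[E|E]]]; try congruence; subst e.
    + apply (keyK G D3 conn six NG v a b c d); auto.
    + apply (keyK G D3 conn six NG v b a c d); auto.
      * intros z H1 H2. destruct (Hv z H1 H2) as [ ->|[ ->| ->]]; tauto.
      * intros z H1 H2. destruct (Hc z H1 H2) as [ ->|[ ->|[ ->| ->]]]; tauto.
  - assert (R : forall z, z = v \/ adj G v z).
    { apply reach; auto. intros y z [ ->|Hvy] Hyz; [right; exact Hyz|].
      destruct (classic (z = v)) as [|nzv]; [left; auto|right].
      destruct (classic (adj G v z)) as [|nvz]; [auto|exfalso].
      destruct (classic (z = y)) as [ ->|nzy]; [contradiction|].
      destruct (classic (y = v)) as [ ->|nyv]; [contradiction|].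
      apply Hno. exists y, z. repeat split; auto. }
    destruct (pick (v :: l6') [v] 1 nd6 ltac:(simpl in *; lia)) as [lc [ndc [lenc [inc notc]]]].
    destruct lc as [|c [|]]; simpl in lenc; try discriminate.
    assert (ncv : c <> v) by (intro; subst; apply (notc v); simpl; auto).
    assert (Hvc : adj G v c) by (destruct (R c); [congruence|auto]).
    destruct (pick1 (adj G c) c v v (D3 c)) as [d [Hcd [ndc' [ndv _]]]].
    assert (Hvd : adj G v d) by (destruct (R d); [congruence|auto]).
    destruct (pick (v :: l6') [v;c;d] 3 nd6 ltac:(simpl in *; lia)) as [l3 [nd3 [len3 [inc3 not3]]]].
    destruct l3 as [|a [|b [|z [|]]]]; simpl in len3; try discriminate.
    repeat rewrite NoDup_cons_iff in nd3; simpl in nd3.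
    assert (a <> v /\ a <> c /\ a <> d) as [nav [nac nad]] by (pose proof (not3 a); simpl in *; intuition).
    assert (b <> v /\ b <> c /\ b <> d) as [nbv [nbc nbd]] by (pose proof (not3 b); simpl in *; intuition).
    assert (z <> v /\ z <> c /\ z <> d) as [nzv [nzc nzd]] by (pose proof (not3 z); simpl in *; intuition).
    assert (nab : a <> b) by (intro; subst; intuition).
    assert (naz : a <> z) by (intro; subst; intuition).
    assert (nbz : b <> z) by (intro; subst; intuition).
    assert (Hva : adj G v a) by (destruct (R a); [congruence|auto]).
    assert (Hvb : adj G v b) by (destruct (R b); [congruence|auto]).
    assert (Hvz : adj G v z) by (destruct (R z); [congruence|auto]).
    apply (NGv G NG v a b c d z); [mkcopy | notin | assumption].
Qed.

Definition TwoHit (G : graph) (X : list (V G)) := exists v a b c d w1 w2,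
  D5_copy G v a b c d /\ In w1 [v;a;b;c;d] /\ In w2 [v;a;b;c;d] /\ w1 <> w2 /\ In w1 X /\ In w2 X.

Lemma swap_logic G X x y (v1 a1 b1 c1 d1 v2 a2 b2 c2 d2 v3 a3 b3 c3 d3 : V G) :
  hits_D5 G X -> D5_copy G v1 a1 b1 c1 d1 -> D5_copy G v2 a2 b2 c2 d2 -> D5_copy G v3 a3 b3 c3 d3 ->
  In x X -> In x [v1;a1;b1;c1;d1] ->
  (forall w, In w [v2;a2;b2;c2;d2] -> w = y \/ (In w [v1;a1;b1;c1;d1] /\ w <> x)) ->
  In x [v3;a3;b3;c3;d3] -> In y [v3;a3;b3;c3;d3] -> x <> y -> TwoHit G X.
Proof.
  intros hit C1 C2 C3 Hx Hx1 H2 Hx3 Hy3 nxy.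
  destruct (classic (exists w, In w [v1;a1;b1;c1;d1] /\ w <> x /\ In w X)) as [[w [H1 [H3 H4]]]|Hn].
  - exists v1, a1, b1, c1, d1, x, w. refine (conj C1 (conj Hx1 (conj H1 (conj _ (conj Hx H4))))). congruence.
  - destruct (hit _ _ _ _ _ C2) as [w [Hw HwX]].
    destruct (H2 w Hw) as [ ->|[Hw1 nwx]].
    + exists v3, a3, b3, c3, d3, x, y. exact (conj C3 (conj Hx3 (conj Hy3 (conj nxy (conj Hx HwX))))). 
    + exfalso. apply Hn. eauto.
Qed.

Lemma two_hit G X : vertex_transitive G -> hits_D5 G X -> good G -> (exists x, In x X) -> TwoHit G X.
Proof.
  intros vt hit [v [a [b [c [d [z [C [nz Hz]]]]]]]] [x Hx].
  pose proof C as C'. unfold D5_copy in C'. rewrite nodup5 in C'.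
  destruct C' as [[n1 [n2 [n3 [n4 [n5 [n6 [n7 [n8 [n9 n10]]]]]]]]] [Hva [Hvb [Hvc Hcd]]]].
  assert (z <> v /\ z <> a /\ z <> b /\ z <> c /\ z <> d) as [m1 [m2 [m3 [m4 m5]]]]
    by (simpl in nz; intuition).
  destruct Hz as [Hvz|Hcz].
  - destruct (vt a x) as [f [Hf Hfa]].
    assert (inj : forall p q, p <> q -> f p <> f q) by (intros p q npq E; apply npq; eapply aut_inj; eauto).
    apply (swap_logic G X x (f z) (f v) (f a) (f b) (f c) (f d) (f v) (f z) (f b) (f c) (f d)
             (f v) (f a) (f z) (f c) (f d) hit).
    + apply aut_copy; auto.
    + apply aut_copy; auto. mkcopy.
    + apply aut_copy; auto. mkcopy.
    + auto.
    + rewrite <- Hfa; simpl; tauto.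
    + intros w Hw. simpl in Hw. rewrite <- Hfa.
      destruct Hw as [ <-|[ <-|[ <-|[ <-|[ <-|[]]]]]]; [right|left; auto|right|right|right];
        (split; [simpl; tauto| apply inj; congruence]).
    + rewrite <- Hfa; simpl; tauto.
    + simpl; tauto.
    + rewrite <- Hfa. apply inj. congruence.
  - destruct (vt d x) as [f [Hf Hfd]].
    assert (inj : forall p q, p <> q -> f p <> f q) by (intros p q npq E; apply npq; eapply aut_inj; eauto).
    apply (swap_logic G X x (f z) (f v) (f a) (f b) (f c) (f d) (f v) (f a) (f b) (f c) (f z)
             (f c) (f d) (f z) (f v) (f a) hit).
    + apply aut_copy; auto.
    + apply aut_copy; auto. mkcopy.
    + apply aut_copy; auto. mkcopy.
    + auto.
    + rewrite <- Hfd; simpl; tauto.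
    + intros w Hw. simpl in Hw. rewrite <- Hfd.
      destruct Hw as [ <-|[ <-|[ <-|[ <-|[ <-|[]]]]]]; [right|right|right|right|left; auto];
        (split; [simpl; tauto| apply inj; congruence]).
    + rewrite <- Hfd; simpl; tauto.
    + simpl; tauto.
    + rewrite <- Hfd. apply inj. congruence.
Qed.

Lemma finite_V G X : vertex_transitive G -> contains_D5 G -> hits_D5 G X ->
  exists l, forall v : V G, In v l.
Proof.
  intros vt cD5 hit. destruct (classic (exists l, forall v : V G, In v l)) as [H|Hn]; [exact H|exfalso].
  assert (Hinf : forall l, exists v : V G, ~ In v l).
  { intros l. apply not_all_ex_not. intro H. apply Hn. exists l. exact H. }
  destruct (classic (exists (w : V G) l, forall z, adj G w z -> In z l)) as [[w0 [l0 Hl0]]|Hnf].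
  - assert (Hall : forall w, exists l, forall z, adj G w z -> In z l).
    { intros w. destruct (vt w w0) as [f [Hf Hfw]].
      destruct Hf as [[g [Hg1 Hg2]] Hf'].
      exists (map g l0). intros z Hz.
      assert (In (f z) l0). { apply Hl0. rewrite <- Hfw. apply aut_adj; auto.
        split; [exists g; auto| exact Hf']. }
      rewrite <- (Hg1 z). apply in_map. auto. }
    pose (L := fun w => proj1_sig (constructive_indefinite_description _ (Hall w))).
    assert (HL : forall w z, adj G w z -> In z (L w))
      by (intros w; exact (proj2_sig (constructive_indefinite_description _ (Hall w)))).
    pose (B := fun l => l ++ flat_map L l).
    assert (B1 : forall l z, In z l -> In z (B l)) by (intros; apply in_or_app; auto).
    assert (B2 : forall l w z, In w l -> adj G w z -> In z (B l)).
    { intros l w z Hw Hwz. apply in_or_app. right. apply in_flat_map. eauto. }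
    destruct (Hinf (B (B X))) as [y Hy].
    destruct cD5 as [v [a [b [c [d Cp]]]]].
    destruct (vt v y) as [f [Hf Hfv]].
    pose proof (aut_copy G f _ _ _ _ _ Hf Cp) as Cf.
    destruct Cp as [_ [Hva [Hvb [Hvc Hcd]]]].
    destruct (hit _ _ _ _ _ Cf) as [w [Hw HwX]]. apply Hy. rewrite <- Hfv.
    simpl in Hw. destruct Hw as [ <-|[ <-|[ <-|[ <-|[ <-|[]]]]]].
    + apply B1, B1; auto.
    + apply B1. apply (B2 X (f a)); auto. apply adj_sym, aut_adj; auto.
    + apply B1. apply (B2 X (f b)); auto. apply adj_sym, aut_adj; auto.
    + apply B1. apply (B2 X (f c)); auto. apply adj_sym, aut_adj; auto.
    + apply (B2 (B X) (f c)). apply (B2 X (f d)); auto. apply adj_sym, aut_adj; auto.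
      apply adj_sym, aut_adj; auto.
  - assert (Hnf' : forall w l, exists z, adj G w z /\ ~ In z l).
    { intros w l. apply NNPP. intro H. apply Hnf. exists w, l. intros z Hz.
      apply NNPP. intro H'. apply H. eauto. }
    destruct (Hinf X) as [v Hv].
    destruct (Hnf' v (v :: X)) as [a [Ha na]].
    destruct (Hnf' v (a :: v :: X)) as [b [Hb nb]].
    destruct (Hnf' v (b :: a :: v :: X)) as [c [Hc nc]].
    destruct (Hnf' c (c :: b :: a :: v :: X)) as [d [Hd nd]].
    simpl in na, nb, nc, nd.
    assert (Cp : D5_copy G v a b c d).
    { unfold D5_copy. rewrite nodup5. repeat split; auto; intro; subst; tauto. }
    destruct (hit _ _ _ _ _ Cp) as [w [Hw HwX]].
    simpl in Hw. destruct Hw as [ <-|[ <-|[ <-|[ <-|[ <-|[]]]]]]; tauto.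
Qed.

From mathcomp Require all_boot zify.
Module Count.
Import all_boot zify.

Definition pb (P : Prop) : bool := if excluded_middle_informative P then true else false.
Lemma pbP P : reflect P (pb P).
Proof. rewrite /pb; case: excluded_middle_informative => H; constructor; exact H. Qed.

Lemma counting G (l X : list (V G)) : NoDup l -> (forall v, In v l) -> NoDup X ->
  vertex_transitive G -> hits_D5 G X -> TwoHit G X -> (length l < 5 * length X)%coq_nat.
Proof.
move=> ndl Hl ndX vt hit [v0 [a0 [b0 [c0 [d0 [w1 [w2 [Hc0 [Hw1 [Hw2 [Hw12 [HX1 HX2]]]]]]]]]]]].
set N := length l.
pose dec (i : 'I_N) := List.nth i l v0.
have dec_inj : injective dec.
  move=> i j; rewrite /dec => E; apply: val_inj => /=.
  have := proj1 (NoDup_nth l v0) ndl; move=> /(_ i j (elimT ltP (ltn_ord i)) (elimT ltP (ltn_ord j))).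
  by apply.
have dec_surj : forall v, exists i, dec i = v.
  move=> v; have [k [Hk E]] := In_nth l v v0 (Hl v).
  by exists (Ordinal (introT ltP Hk)).
pose enc v := proj1_sig (constructive_indefinite_description _ (dec_surj v)).
have decK : forall v, dec (enc v) = v.
  by move=> v; exact: (proj2_sig (constructive_indefinite_description _ (dec_surj v))).
have encK : forall i, enc (dec i) = i by move=> i; apply: dec_inj; rewrite decK.
pose xin (i : 'I_N) := pb (In (dec i) X).
pose tv (t : {ffun 'I_5 -> 'I_N}) (k : nat) := dec (t (inord k)).
pose cp (t : {ffun 'I_5 -> 'I_N}) := pb (D5_copy G (tv t 0) (tv t 1) (tv t 2) (tv t 3) (tv t 4)).
pose hits (t : {ffun 'I_5 -> 'I_N}) := \sum_(j < 5) (xin (t j) : nat).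
pose T := \sum_(t | cp t) 1.
pose S := \sum_(t | cp t) hits t.
pose cnt (j : 'I_5) (w : 'I_N) := #|[set t | cp t & t j == w]|.
have cnt_le : forall j w w', cnt j w <= cnt j w'.
  move=> j w w'.
  have [f [Hf Efw]] := vt (dec w) (dec w').
  pose F (t : {ffun 'I_5 -> 'I_N}) := [ffun k => enc (f (dec (t k)))].
  have Finj : injective F.
    move=> t1 t2 E; apply/ffunP => k.
    move/ffunP: E => /(_ k); rewrite !ffunE => E'.
    apply: dec_inj; apply: (aut_inj G f) => //.
    by rewrite -[f (dec (t1 k))]decK E' decK.
  rewrite /cnt -(card_imset _ Finj); apply: subset_leq_card.
  apply/subsetP => _ /imsetP [t Ht ->]; rewrite inE in Ht; case/andP: Ht => Hcp /eqP Etj.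
  rewrite inE; apply/andP; split.
    apply/pbP; have := (aut_copy G f _ _ _ _ _ Hf (elimT (pbP _) Hcp)).
    by rewrite /tv !ffunE !decK.
  by rewrite ffunE Etj Efw encK.
set w0 := enc v0.
have cnt_c : forall j w, cnt j w = cnt j w0.
  by move=> j w; apply/eqP; rewrite eqn_leq !cnt_le.
have T_eq : forall j, T = N * cnt j w0.
  move=> j; rewrite /T (partition_big (fun t : {ffun 'I_5 -> 'I_N} => t j) predT) //=.
  rewrite (eq_bigr (fun _ => cnt j w0)); last first.
    by move=> w _; rewrite -(cnt_c j w) /cnt sum1dep_card.
  by rewrite sum_nat_const card_ord.
have S_eq : S = \sum_(j < 5) #|[set w | xin w]| * cnt j w0.
  rewrite /S /hits exchange_big; apply: eq_bigr => j _.
  transitivity (\sum_(t | cp t && xin (t j)) 1).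
    by rewrite [RHS]big_mkcondr; apply: eq_bigr => t _; case: (xin (t j)).
  rewrite (partition_big (fun t : {ffun 'I_5 -> 'I_N} => t j) xin); last by move=> t /andP [_ H].
  rewrite -sum_nat_cond_const; apply: eq_bigr => w Hw.
  rewrite -(cnt_c j w) /cnt -sum1dep_card; apply: eq_bigl => t.
  case: (boolP (t j == w)) => [/eqP ->|_]; rewrite ?eqxx ?andbT ?andbF //; by move: Hw; case: (xin w); rewrite ?andbT.
have in5 : forall (t : {ffun 'I_5 -> 'I_N}) w, In w [tv t 0; tv t 1; tv t 2; tv t 3; tv t 4] ->
    exists j, dec (t j) = w.
  move=> t w /=; case=> [<-|[<-|[<-|[<-|[<-|[]]]]]]; by eexists.
have hits1 : forall t, cp t -> 1 <= hits t.
  move=> t /pbP Hc; have [w [Hw HwX]] := hit _ _ _ _ _ Hc.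
  have [j Ej] := in5 t w Hw.
  rewrite /hits (bigD1 j) //=.
  have -> : xin (t j) by apply/pbP; rewrite Ej.
  by [].
pose t0 := [ffun k : 'I_5 => enc (List.nth k [v0;a0;b0;c0;d0] v0)].
have tv0 : forall k, k < 5 -> tv t0 k = List.nth k [v0;a0;b0;c0;d0] v0.
  by move=> k Hk; rewrite /tv ffunE decK inordK.
have cp0 : cp t0.
  by apply/pbP; rewrite !tv0.
have hits2 : 2 <= hits t0.
  have [j1 Ej1] : exists j, dec (t0 j) = w1.
    apply: in5; by rewrite !tv0.
  have [j2 Ej2] : exists j, dec (t0 j) = w2.
    apply: in5; by rewrite !tv0.
  have nj : j2 != j1.
    by apply/eqP => E; apply: Hw12; rewrite -Ej1 -Ej2 E.
  rewrite /hits (bigD1 j1) //= (bigD1 j2) //=.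
  have -> : xin (t0 j1) by apply/pbP; rewrite Ej1.
  have -> : xin (t0 j2) by apply/pbP; rewrite Ej2.
  by rewrite addnA leq_addr.
have ST : T + 1 <= S.
  rewrite /S /T (bigD1 t0) //= [in X in _ <= X](bigD1 t0) //=.
  rewrite addnC addnA add1n; apply: leq_add => //.
  by apply: leq_sum => t /andP [Hc _]; apply: hits1.
have cardX : #|[set w | xin w]| <= length X.
  have In_mem : forall (x : 'I_N) (s : seq 'I_N), List.In x s -> x \in s.
    move=> x; elim=> //= z s IHs [->|Hy]; first by rewrite in_cons eqxx.
    by rewrite in_cons IHs ?orbT.
  have ndm : forall s : seq 'I_N, uniq s -> NoDup (List.map dec s).
    elim=> [|x s IH] /=; first by constructor.
    case/andP => nx us; constructor; last exact: IH.
    move/in_map_iff => [y [Ey Hy]]; have Exy := dec_inj _ _ Ey; subst y.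
    by move: nx => /negP; apply; apply: In_mem.
  have lenm : forall s : seq 'I_N, length (List.map dec s) = size s.
    by elim=> //= x s ->.
  rewrite cardE -lenm; apply/leP; apply: NoDup_incl_length.
    by apply: ndm; apply: enum_uniq.
  move=> y /in_map_iff [i [<- Hi]].
  have : i \in enum [set w | xin w] by apply: In_mem.
  by rewrite mem_enum inE => /pbP.
have Npos : 0 < N.
  by case: (dec_surj v0) => i _; apply: (leq_ltn_trans _ (ltn_ord i)).
have NS : N * S = 5 * (#|[set w | xin w]| * T).
  rewrite S_eq big_distrr /=.
  rewrite (eq_bigr (fun _ => #|[set w | xin w]| * T)); last first.
    by move=> j _; rewrite mulnCA -(T_eq j).
  by rewrite sum_nat_const card_ord.
have h1 : N * (T + 1) <= N * S by rewrite leq_mul2l ST orbT.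
apply/ltP.
move: NS h1 cardX Npos; set x := #|_|; move=> NS h1 cardX Npos.
rewrite ltnNge; apply/negP => H5.
have h2 : 5 * x * T <= N * T.
  apply: leq_mul => //; apply: leq_trans H5; by rewrite leq_mul2l cardX orbT.
lia.
Qed.

End Count.

Theorem theorem2 :
  (forall G : graph,
     vertex_transitive G -> connected G -> more_than_five_vertices G ->
     contains_D5 G ->
     forall n : nat, Upsilon_v_D5 G n ->
     exists s : nat, Upsilon_v_sym_D5 G s /\ s < 5 * n)
  /\ ~ D5_vertex_costly vt_connected.
Proof.
  assert (P1 : forall G : graph,
     vertex_transitive G -> connected G -> more_than_five_vertices G ->
     contains_D5 G ->
     forall n : nat, Upsilon_v_D5 G n ->
     exists s : nat, Upsilon_v_sym_D5 G s /\ s < 5 * n).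
  { intros G vt conn six cD5 n [[X0 [ndX [lenX hitX]]] minX].
    destruct (finite_V G X0 vt cD5 hitX) as [l0 Hl0].
    destruct (nodup_exists l0) as [l [ndl Hl]].
    assert (Hall : forall v, In v l) by auto.
    exists (length l). split.
    - split.
      + exists l. split; [exact ndl|]. split; [reflexivity|]. split.
        * intros v a b c d _. exists v. split; [simpl; auto | apply Hall].
        * intros f _ x _. apply Hall.
      + intros m [Y [ndY [lenY [hitY invY]]]].
        destruct cD5 as [v [a [b [c [d Cp]]]]].
        destruct (hitY _ _ _ _ _ Cp) as [y [_ Hy]].
        assert (incl l Y).
        { intros u _. destruct (vt y u) as [f [Hf Hfu]]. rewrite <- Hfu. apply invY; auto. }
        subst m. apply NoDup_incl_length; auto.
    - assert (Hx : exists x, In x X0).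
      { destruct cD5 as [v [a [b [c [d Cp]]]]].
        destruct (hitX _ _ _ _ _ Cp) as [y [_ Hy]]. eauto. }
      pose proof (two_hit G X0 vt hitX (good_exists G (deg3_of G vt cD5) conn six) Hx) as TH.
      pose proof (Count.counting G l X0 ndl Hall ndX vt hitX TH). lia. }
  split; [exact P1|].
  intros H. destruct (H 6) as [G [[vt conn] [n [s [Hn [Hs [Hs5 H6]]]]]]].
  destruct (classic (contains_D5 G)) as [cD5 | ncD5].
  - assert (six : more_than_five_vertices G).
    { destruct Hs as [[Y [ndY [lenY _]]] _].
      destruct (pick Y [] 6 ndY ltac:(simpl; lia)) as [l' [nd' [len' _]]].
      exists l'. auto. }
    destruct (P1 G vt conn six cD5 n Hn) as [s' [Hs' lt]].
    destruct Hs as [Hs1 Hs2], Hs' as [Hs'1 Hs'2].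
    pose proof (Hs2 s' Hs'1). pose proof (Hs'2 s Hs1). lia.
  - assert (n <= 0).
    { apply (proj2 Hn). exists []. split; [constructor|]. split; [reflexivity|].
      intros v a b c d Cp. exfalso. apply ncD5. exists v, a, b, c, d. exact Cp. }
    lia.
Qed.
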